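(* Let $H$ be a bialgebra over a commutative ring $\Bbbk$ and $A$ a left $H$-module algebra. Then the maps $\Phi:H^{\otimes n}\to\mathrm{Hom}_\Bbbk(A^{\otimes n},A)$, $\Phi(h_1\otimes\dots\otimes h_n)(a_1\otimes\dots\otimes a_n)=(h_1.a_1)\cdots(h_n.a_n)$, define a morphism of linear operads with multiplication from the operad $\mathcal{O}_H$ (whose cochain complex is the cobar construction $\Omega H$) to the endomorphism operad $\mathcal{E}nd(A)$. In particular $\Phi$ induces a morphism of Gerstenhaber algebras $H^*(\Phi):\mathrm{Cotor}^*_H(\Bbbk,\Bbbk)\to HH^*(A,A)$.
   Context: A left $H$-module algebra is an algebra $A$ with a left $H$-module structure such that $h.(ab)=(h^{(1)}.a)(h^{(2).}b)$ and $h.1_A=\varepsilon(h)1_A$. $\mathcal{O}_H(n)=H^{\otimes n}$ with $(a_1\otimes\dots\otimes a_m)\circ_i(b_1\otimes\dots\otimes b_n)=a_1\otimes\dots\otimes a_{i-1}\otimes a_i^{(1)}b_1\otimes\dots\otimes a_i^{(n)}b_n\otimes a_{i+1}\otimes\dots\otimes a_m$ (with $\Delta^{n-1}(a_i)=a_i^{(1)}\otimes\dots\otimes a_i^{(n)}$), identity $1_H$, multiplication $1_H\otimes1_H$, $e=1\in\Bbbk$. $\mathcal{E}nd(A)(n)=\mathrm{Hom}(A^{\otimes n},A)$ with $\gamma(f;g_1,\dots,g_n)=f\circ(g_1\otimes\dots\otimes g_n)$, identity $\mathrm{id}_A$, multiplication the product of $A$, $e$ the unit $\Bbbk\to A$.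 For an operad with multiplication $(O,\mu,e)$, the cohomology of the cochain complex ($df=\mu\circ_2f+\sum_i(-1)^if\circ_i\mu+(-1)^{n+1}\mu\circ_1f$) is a Gerstenhaber algebra with cup product $(\mu\circ_1f)\circ_{m+1}g$ and bracket $\{f,g\}=f\bar\circ g-(-1)^{(m-1)(n-1)}g\bar\circ f$, $f\bar\circ g=(-1)^{(m-1)(n-1)}\sum_i(-1)^{(n-1)(i-1)}f\circ_ig$; for $\mathcal{O}_H$ this gives $\mathrm{Cotor}^*_H(\Bbbk,\Bbbk)$ and for $\mathcal{E}nd(A)$ it gives $HH^*(A,A)$. *)

(* Defs.v *)
From HB Require Import structures.
From mathcomp Require Import all_boot all_order all_algebra.
Set Implicit Arguments. Unset Strict Implicit. Unset Printing Implicit Defensive.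
Import Order.TTheory GRing.Theory Num.Theory.
Local Open Scope ring_scope.

Section Defs.
Variable R : comPzRingType.

(* An element sum_x r_x (v_x1 (x) ... (x) v_xn) of V^{(x)n} is represented by
   the formal sum [:: (r_x, [:: v_x1; ...; v_xn]) ; ...].                   *)
Definition fs (V : Type) := seq (R * seq V).

Definition wf (V : Type) (n : nat) (s : fs V) : bool :=
  all (fun x => size x.2 == n) s.

Definition fscale (V : Type) (c : R) (s : fs V) : fs V :=
  [seq (c * x.1, x.2) | x <- s].

Definition multilin (V M : lmodType R) (n : nat) (f : seq V -> M) : Prop :=
  forall (u : seq V) (j : nat) (c : R) (x y : V), size u = n -> (j < n)%N ->
    f (set_nth 0 u j (c *: x + y)) = c *: f (set_nth 0 u j x) + f (set_nth 0 u j y).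

Definition evalfs (V M : lmodType R) (f : seq V -> M) (s : fs V) : M :=
  \sum_(x <- s) x.1 *: f x.2.

(* equality in the tensor power V^{(x)n} over R: by the universal property,
   two formal sums define the same tensor iff every n-multilinear map into
   every R-module takes the same value on them. *)
Definition teq (V : lmodType R) (n : nat) (s t : fs V) : Prop :=
  forall (M : lmodType R) (f : seq V -> M), multilin n f ->
    evalfs f s = evalfs f t.

Definition is_bialgebra (H : algType R) (Delta : H -> fs H) (eps : H -> R) : Prop :=
  [/\ (forall h, wf 2 (Delta h)),
      (forall c g h, teq 2 (Delta (c *: g + h)) (fscale c (Delta g) ++ Delta h)),
      (forall c g h, eps (c *: g + h) = c * eps g + eps h) &
   [/\
      (* coassociativity (Delta (x) id) Delta = (id (x) Delta) Delta *)
      (forall h, teq 3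
         (flatten [seq [seq (x.1 * y.1, y.2 ++ [:: nth 0 x.2 1])
                        | y <- Delta (nth 0 x.2 0)] | x <- Delta h])
         (flatten [seq [seq (x.1 * y.1, nth 0 x.2 0 :: y.2)
                        | y <- Delta (nth 0 x.2 1)] | x <- Delta h])),
      (* counit: (eps (x) id) Delta = id = (id (x) eps) Delta *)
      (forall h, teq 1 [seq (x.1 * eps (nth 0 x.2 0), [:: nth 0 x.2 1]) | x <- Delta h]
                       [:: (1, [:: h])]
              /\ teq 1 [seq (x.1 * eps (nth 0 x.2 1), [:: nth 0 x.2 0]) | x <- Delta h]
                       [:: (1, [:: h])]),
      (* Delta and eps are unital algebra maps *)
      (forall g h, teq 2 (Delta (g * h))
         [seq (x.1 * y.1, [:: nth 0 x.2 0 * nth 0 y.2 0; nth 0 x.2 1 * nth 0 y.2 1])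
         | x <- Delta g, y <- Delta h])
      & [/\ teq 2 (Delta 1) [:: (1, [:: 1; 1])],
            (forall g h, eps (g * h) = eps g * eps h) & eps 1 = 1]]].

Definition is_module_algebra (H A : algType R) (Delta : H -> fs H) (eps : H -> R)
    (act : H -> A -> A) : Prop :=
  [/\ (forall c g h a, act (c *: g + h) a = c *: act g a + act h a),
      (forall c h a b, act h (c *: a + b) = c *: act h a + act h b),
      (forall g h a, act (g * h) a = act g (act h a)),
      (forall a, act 1 a = a) &
   [/\ (forall h a b, act h (a * b) =
         \sum_(x <- Delta h) x.1 *: (act (nth 0 x.2 0) a * act (nth 0 x.2 1) b))
      & (forall h, act h 1 = eps h *: 1)]].

(* comp m n i f g = f o_i g, for f of arity m and g of arity n, 1 <= i <= m *)
Section Generic.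
Variables (X : Type) (comp : nat -> nat -> nat -> X -> X -> X)
  (add : X -> X -> X) (scl : R -> X -> X) (zero : X) (mu : X).

Definition sgnz (z : int) : R := (-1) ^+ `|z|%N.

Definition gsum (F : nat -> X) (l : seq nat) : X :=
  foldr (fun i acc => add (F i) acc) zero l.

Definition op_d (n : nat) (f : X) : X :=
  add (comp 2 n 2 mu f)
      (add (gsum (fun i => scl (sgnz i%:Z) (comp n 2 i f mu)) (iota 1 n))
           (scl (sgnz n.+1%:Z) (comp 2 n 1 mu f))).

Definition op_cup (m n : nat) (f g : X) : X :=
  comp m.+1 n m.+1 (comp 2 m 1 mu f) g.

Definition op_circ (m n : nat) (f g : X) : X :=
  scl (sgnz ((m%:Z - 1) * (n%:Z - 1)))
      (gsum (fun i => scl (sgnz ((n%:Z - 1) * (i%:Z - 1))) (comp m n i f g))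
            (iota 1 m)).

Definition op_bracket (m n : nat) (f g : X) : X :=
  add (op_circ m n f g)
      (scl (- sgnz ((m%:Z - 1) * (n%:Z - 1))) (op_circ n m g f)).
End Generic.

Section OH.
Variables (H : algType R) (Delta : H -> fs H) (eps : H -> R).

(* iterated coproduct Delta^(n-1) : H -> H^{(x)n}; Delta^(-1) = eps *)
Fixpoint Deltan (n : nat) (h : H) : fs H :=
  match n with
  | 0 => [:: (eps h, [::])]
  | 1 => [:: (1, [:: h])]
  | S ((S _) as k) =>
      flatten [seq [seq (x.1 * y.1, nth 0 x.2 0 :: y.2)
                   | y <- Deltan k (nth 0 x.2 1)] | x <- Delta h]
  end.

(* (a_1..a_m) o_i (b_1..b_n) = a_1..a_(i-1) (a_i^(1) b_1) .. (a_i^(n) b_n) a_(i+1)..a_m,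
   extended bilinearly *)
Definition compH (m n i : nat) (s t : fs H) : fs H :=
  flatten [seq [seq (x.1 * y.1 * z.1,
                     take i.-1 x.2 ++ [seq p.1 * p.2 | p <- zip z.2 y.2] ++ drop i x.2)
               | z <- Deltan n (nth 0 x.2 i.-1)]
          | x <- s, y <- t].

Definition muH : fs H := [:: (1, [:: 1; 1])].
Definition idH : fs H := [:: (1, [:: 1])].
Definition eH : fs H := [:: (1, [::])].

Definition dH := op_d compH (@cat _) (@fscale H) [::] muH.
Definition cupH := op_cup compH muH.
Definition bracketH := op_bracket compH (@cat _) (@fscale H) [::].
End OH.

(* Hom(A^{(x)n}, A) is represented by (multilinear) maps seq A -> A, read on
   argument lists of length n. *)
Section EndA.
Variable A : algType R.

Definition compE (m n i : nat) (f g : seq A -> A) : seq A -> A :=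
  fun a => f (take i.-1 a ++ g (take n (drop i.-1 a)) :: drop (i.-1 + n) a).

Definition addE (f g : seq A -> A) : seq A -> A := fun a => f a + g a.
Definition sclE (c : R) (f : seq A -> A) : seq A -> A := fun a => c *: f a.
Definition zeroE : seq A -> A := fun _ => 0.
Definition muE : seq A -> A := fun a => nth 0 a 0 * nth 0 a 1.

Definition dE := op_d compE addE sclE zeroE muE.
Definition cupE := op_cup compE muE.
Definition bracketE := op_bracket compE addE sclE zeroE.
End EndA.

Definition Phi (H A : algType R) (act : H -> A -> A) (n : nat) (s : fs H) : seq A -> A :=
  fun a => \sum_(x <- s) x.1 *: \prod_(j < n) act (nth 0 x.2 j) (nth 0 a j).

End Defs.

(* Main.v *)
Require Import Defs.
From HB Require Import structures.
From mathcomp Require Import all_boot all_order all_algebra.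
From mathcomp Require Import zify.
Import GRing.Theory.
Local Open Scope ring_scope.

Section Aux.
Variable R : comPzRingType.

Lemma prod_split (V : lmodType R) (A : algType R) (F : nat -> V -> A) n u j v :
  (j < n)%N ->
  \prod_(k < n) F k (nth 0 (set_nth 0 u j v) k) =
  \prod_(0 <= k < j) F k (nth 0 u k) * F j v * \prod_(j.+1 <= k < n) F k (nth 0 u k).
Proof.
move=> hj.
rewrite -(big_mkord xpredT (fun k => F k (nth 0 (set_nth 0 u j v) k))).
rewrite (@big_cat_nat _ _ _ j) /= ?(ltnW hj) // (big_ltn hj) mulrA.
rewrite nth_set_nth /= eqxx.
congr (_ * _ * _).
  apply: eq_big_nat => k /andP[_ hk]; rewrite nth_set_nth /= ifN //.
  by rewrite neq_ltn hk.
apply: eq_big_nat => k /andP[hk _]; rewrite nth_set_nth /= ifN //.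
by rewrite neq_ltn hk orbT.
Qed.

Lemma prod_lin (V : lmodType R) (A : algType R) (F : nat -> V -> A) n u j c x y :
  (forall k c x y, F k (c *: x + y) = c *: F k x + F k y) -> (j < n)%N ->
  \prod_(k < n) F k (nth 0 (set_nth 0 u j (c *: x + y)) k) =
  c *: \prod_(k < n) F k (nth 0 (set_nth 0 u j x) k)
  + \prod_(k < n) F k (nth 0 (set_nth 0 u j y) k).
Proof.
move=> hF hj; rewrite !prod_split // hF mulrDr mulrDl.
by rewrite -scalerAr -scalerAl.
Qed.

Section Act.
Variables (H A : algType R) (Delta : H -> fs R H) (eps : H -> R) (act : H -> A -> A).
Hypothesis actDl : forall c g h a, act (c *: g + h) a = c *: act g a + act h a.
Hypothesis actDr : forall c h a b, act h (c *: a + b) = c *: act h a + act h b.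
Hypothesis actM : forall g h a, act (g * h) a = act g (act h a).
Hypothesis act1 : forall a, act 1 a = a.
Hypothesis actMA : forall h a b, act h (a * b) =
         \sum_(x <- Delta h) x.1 *: (act (nth 0 x.2 0) a * act (nth 0 x.2 1) b).
Hypothesis actU : forall h, act h 1 = eps h *: 1.

Lemma Phi_cat n s t a : Phi act n (s ++ t) a = Phi act n s a + Phi act n t a.
Proof. by rewrite /Phi big_cat. Qed.

Lemma Phi_scale n c s a : Phi act n (fscale c s) a = c *: Phi act n s a.
Proof.
rewrite /Phi /fscale big_map scaler_sumr; apply: eq_bigr => x _ /=.
by rewrite scalerA.
Qed.

Lemma Phi_nil n a : Phi act n [::] a = 0.
Proof. by rewrite /Phi big_nil. Qed.

Lemma prod_zip (F : H -> A -> A) n l (a : seq A) :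
  size l = n -> size a = n ->
  \prod_(j < n) F (nth 0 l j) (nth 0 a j) = \prod_(p <- zip l a) F p.1 p.2.
Proof.
elim: l n a => [|h l IH] n [|b a] //= <-; rewrite ?big_ord0 ?big_nil //.
move=> [ha]; rewrite big_ord_recl big_cons /=; congr (_ * _).
exact: IH.
Qed.

Lemma act0 h : act h 0 = 0.
Proof.
have E := actDr (-1) h 0 0.
by rewrite scaler0 addr0 scaleN1r addNr in E.
Qed.

Lemma act_sum (I : Type) h (s : seq I) (c : I -> R) (G : I -> A) :
  act h (\sum_(x <- s) c x *: G x) = \sum_(x <- s) c x *: act h (G x).
Proof.
elim: s => [|x s IH]; first by rewrite !big_nil act0.
by rewrite !big_cons actDr IH.
Qed.

Lemma size_Deltan n h z : z \in Deltan Delta eps n h -> size z.2 = n.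
Proof.
elim: n h z => [|[|n] IH] h z /=; first by rewrite inE => /eqP ->.
  by rewrite inE => /eqP ->.
case/flatten_mapP => x _ /mapP [y hy ->] /=.
by rewrite (IH _ _ hy).
Qed.

Lemma act_prod h (cs : seq A) :
  act h (\prod_(c <- cs) c) =
  \sum_(z <- Deltan Delta eps (size cs) h) z.1 *: \prod_(p <- zip z.2 cs) act p.1 p.2.
Proof.
elim: cs h => [|c cs IH] h.
  by rewrite big_nil /= actU big_cons big_nil /= big_nil addr0.
case: cs IH => [|c' cs] IH.
  by rewrite /= big_cons big_nil mulr1 big_cons big_nil addr0 /= scale1r big_cons big_nil mulr1.
rewrite big_cons actMA.
rewrite [Deltan _ _ _ _]/= big_flatten big_map /=.
apply: eq_bigr => x _.
rewrite IH mulr_sumr scaler_sumr big_map.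
apply: eq_bigr => y _ /=.
by rewrite big_cons /= -scalerAr scalerA.
Qed.

Lemma zip_act (z y : seq H) (a : seq A) :
  \prod_(p <- zip z [seq act q.1 q.2 | q <- zip y a]) act p.1 p.2 =
  \prod_(p <- zip [seq q.1 * q.2 | q <- zip z y] a) act p.1 p.2.
Proof.
elim: z y a => [|h z IH] [|g y] [|b a] //=.
by rewrite !big_cons /= actM IH.
Qed.

Lemma wf_sizeP {V : eqType} {n} {s : fs R V} {x} : wf n s -> x \in s -> size x.2 = n.
Proof. by move=> /allP h /h /eqP. Qed.

Lemma act_inner n h (y : seq H) (a2 : seq A) : size y = n -> size a2 = n ->
  act h (\prod_(j < n) act y`_j a2`_j) =
  \sum_(z <- Deltan Delta eps n h)
     z.1 *: \prod_(p <- zip [seq p.1 * p.2 | p <- zip z.2 y] a2) act p.1 p.2.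
Proof.
move=> sy s2; rewrite (prod_zip act _ _ _ sy s2).
rewrite -(big_map (fun q => act q.1 q.2) xpredT id) act_prod.
rewrite size_map size_zip sy s2 minnn; apply: eq_bigr => z _.
by rewrite zip_act.
Qed.

Lemma Phi_comp m n i k s t a : wf m s -> wf n t -> (1 <= i <= m)%N ->
  k = (m + n).-1 -> size a = k ->
  Phi act k (compH Delta eps m n i s t) a = compE m n i (Phi act m s) (Phi act n t) a.
Proof.
move=> ws wt /andP[]; case: i => [//|i] _ him -> sa.
set a1 := take i a; set a2 := take n (drop i a); set a3 := drop (i + n) a.
have ea : a = a1 ++ a2 ++ a3 by rewrite /a1 /a2 /a3 addnC -drop_drop !cat_take_drop.
have s1 : size a1 = i by rewrite size_take; case: ltnP => //; lia.
have s2 : size a2 = n by rewrite size_take size_drop; case: ltnP => //; lia.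
rewrite /compE /= -/a1 -/a2 -/a3.
rewrite /Phi big_flatten big_allpairs_dep /=.
rewrite big_seq [RHS]big_seq; apply: eq_bigr => x xs.
have sx : size x.2 = m := wf_sizeP ws xs.
set G := \sum_(x0 <- t) x0.1 *: _.
have sb : size (a1 ++ G :: a3) = m by rewrite size_cat /= s1 size_drop sa; lia.

rewrite (prod_zip act _ _ _ sx sb).
have ex : x.2 = take i x.2 ++ x.2`_i :: drop i.+1 x.2 by rewrite -drop_nth ?cat_take_drop // sx.
rewrite [in RHS]ex zip_cat; last by rewrite size_take sx him s1.
rewrite big_cat big_cons /= -/(zip (drop i.+1 x.2) a3).
rewrite /G act_sum [X in _ *: (_ * (X * _))]big_seq.
under [X in _ *: (_ * (X * _))]eq_bigr => y yt do rewrite (act_inner _ _ _ _ (wf_sizeP wt yt) s2).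
rewrite mulr_suml mulr_sumr scaler_sumr [LHS]big_seq; apply: eq_bigr => y yt.
rewrite big_map -scalerAl -scalerAr scalerA mulr_suml mulr_sumr scaler_sumr.
rewrite [LHS]big_seq [RHS]big_seq; apply: eq_bigr => z zD /=.
rewrite -scalerAl -scalerAr scalerA !mulrA; congr (_ *: _).
have sz := size_Deltan _ _ _ zD.
have sy := wf_sizeP wt yt.
have sM : size [seq p.1 * p.2 | p <- zip z.2 y.2] = n by rewrite size_map size_zip sz sy minnn.
rewrite (prod_zip act _ _ _ _ sa); last by rewrite !size_cat sM size_take size_drop sx him; lia.
rewrite {1}ea zip_cat; last by rewrite size_take sx him s1.
rewrite zip_cat; last by rewrite sM s2.
by rewrite !big_cat /= mulrA.
Qed.

Lemma wf_comp m n i s t : wf m s -> wf n t -> (1 <= i <= m)%N ->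
  wf (m + n).-1 (compH Delta eps m n i s t).
Proof.
move=> ws wt /andP[]; case: i => [//|i] _ him.
apply/allP => w /flattenP [r /allpairsP [[x y] [xs yt ->]]] /mapP [z zD ->] /=.
rewrite !size_cat size_map size_zip (size_Deltan _ _ _ zD) (wf_sizeP wt yt) minnn.
rewrite size_take size_drop (wf_sizeP ws xs) him; apply/eqP; lia.
Qed.

Lemma Phi_mu b : Phi act 2 (muH H) b = muE b.
Proof.
by rewrite /Phi /muH big_cons big_nil addr0 scale1r !big_ord_recl big_ord0 /= !act1 mulr1.
Qed.

Lemma wf_muH : wf 2 (muH H). Proof. by []. Qed.

Lemma addE_app (f g : seq A -> A) a : addE f g a = f a + g a. Proof. by []. Qed.
Lemma sclE_app c (f : seq A -> A) a : sclE c f a = c *: f a. Proof. by []. Qed.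

Lemma Phi_gsum k (G : nat -> fs R H) (F : nat -> seq A -> A) l a :
  (forall i, i \in l -> Phi act k (G i) a = F i a) ->
  Phi act k (gsum (@cat _) [::] G l) a = gsum (@addE R A) (@zeroE R A) F l a.
Proof.
elim: l => [|j l IH] hl /=; first by rewrite Phi_nil.
rewrite Phi_cat addE_app hl ?mem_head // IH // => i il.
by apply: hl; rewrite inE il orbT.
Qed.

Lemma main_sec :
  [/\ (forall n (s t : fs R H), wf n s -> wf n t -> teq n s t ->
         forall a : seq A, size a = n -> Phi act n s a = Phi act n t a),
      (forall n (s t : fs R H) (a : seq A),
         Phi act n (s ++ t) a = Phi act n s a + Phi act n t a),
      (forall n c (s : fs R H) (a : seq A),
         Phi act n (fscale c s) a = c *: Phi act n s a),
      (forall n (s : fs R H), wf n s -> multilin n (Phi act n s))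
    & [/\ (forall a : seq A, size a = 1%N -> Phi act 1 (idH H) a = nth 0 a 0),
          (forall a : seq A, size a = 2%N -> Phi act 2 (muH H) a = muE a),
          Phi act 0 (eH H) [::] = 1,
          (forall m n i (s t : fs R H), wf m s -> wf n t -> (1 <= i <= m)%N ->
             forall a : seq A, size a = (m + n).-1 ->
               Phi act (m + n).-1 (compH Delta eps m n i s t) a
               = compE m n i (Phi act m s) (Phi act n t) a)
        & [/\ (forall n (f : fs R H), wf n f ->
                 forall a : seq A, size a = n.+1 ->
                   Phi act n.+1 (dH Delta eps n f) a = dE n (Phi act n f) a),
              (forall m n (f g : fs R H), wf m f -> wf n g ->
                 forall a : seq A, size a = (m + n)%N ->
                   Phi act (m + n) (cupH Delta eps m n f g) a
                   = cupE m n (Phi act m f) (Phi act n g) a)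
            & (forall m n (f g : fs R H), wf m f -> wf n g ->
                 forall a : seq A, size a = (m + n).-1 ->
                   Phi act (m + n).-1 (bracketH Delta eps m n f g) a
                   = bracketE m n (Phi act m f) (Phi act n g) a)]]].
Proof.
split; [ | exact: Phi_cat | exact: Phi_scale | | split; [ | | | | split]].
- move=> n s t _ _ hst a sa.
  apply: (hst A (fun l => \prod_(j < n) act (nth 0 l j) (nth 0 a j))).
  move=> u j c x y _ hj.
  exact: (prod_lin _ _ (fun k h => act h (nth 0 a k)) _ _ _ _ _ _ (fun k c x y => actDl c x y (nth 0 a k))).
- move=> n s _ u j c x y _ hj.
  rewrite /Phi.
  under eq_bigr => w _ do rewrite (prod_lin _ _ (fun k b => act (nth 0 w.2 k) b) _ _ _ _ _ _ (fun k c x y => actDr c (nth 0 w.2 k) x y)) //.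
  rewrite scaler_sumr -big_split /=; apply: eq_bigr => w _.
  by rewrite scalerDr !scalerA mulrC.
- move=> a _; rewrite /Phi /idH big_cons big_nil addr0 scale1r big_ord_recl big_ord0.
  by rewrite /= act1 mulr1.
- by move=> a _; rewrite Phi_mu.
- by rewrite /Phi /eH big_cons big_nil addr0 scale1r big_ord0.
- move=> m n i s t ws wt hi a sa; exact: Phi_comp.
- move=> n f wf_ a sa.
  rewrite /dH /dE /op_d !Phi_cat !addE_app Phi_scale sclE_app.
  rewrite (Phi_comp _ _ _ _ _ _ _ wf_muH wf_) // (Phi_comp _ _ _ _ _ _ _ wf_muH wf_) //.
  rewrite (@Phi_gsum _ _ (fun i => sclE (sgnz R i%:Z) (compE n 2 i (Phi act n f) (muE (A:=A))))).
    by rewrite /compE !Phi_mu.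
  move=> i; rewrite mem_iota => hi.
  rewrite Phi_scale sclE_app (Phi_comp _ _ _ _ _ _ _ wf_ wf_muH) //; last by rewrite addn2.
  by rewrite /compE Phi_mu.
- move=> m n f g wf_ wg a sa.
  rewrite /cupH /cupE /op_cup.
  rewrite (Phi_comp _ _ _ _ _ _ _ (wf_comp _ _ _ _ _ wf_muH wf_ _) wg) //=.
  rewrite /compE; set b := (X in Phi act m.+1 _ X).
  have sb : size b = m.+1.
    by rewrite /b size_cat /= size_take size_drop sa; case: ltnP; lia.
  by rewrite (Phi_comp _ _ _ _ _ _ _ wf_muH wf_) // /compE Phi_mu.
- move=> m n f g wf_ wg a sa.
  rewrite /bracketH /bracketE /op_bracket /op_circ Phi_cat addE_app !Phi_scale !sclE_app.
  congr (_ *: _ + _ *: (_ *: _)); apply: Phi_gsum => i; rewrite mem_iota => hi.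
    by rewrite Phi_scale sclE_app (Phi_comp _ _ _ _ _ _ _ wf_ wg) //.
  by rewrite Phi_scale sclE_app (Phi_comp _ _ _ _ _ _ _ wg wf_) // addnC.
Qed.

End Act.
End Aux.
Theorem lemma7p1 (R : comPzRingType) (H A : algType R)
    (Delta : H -> fs R H) (eps : H -> R) (act : H -> A -> A) :
  is_bialgebra Delta eps ->
  is_module_algebra Delta eps act ->
  (* Phi_n : H^{(x)n} -> Hom(A^{(x)n}, A) is well defined and R-linear, and
     lands in multilinear maps *)
  [/\ (forall n (s t : fs R H), wf n s -> wf n t -> teq n s t ->
         forall a : seq A, size a = n -> Phi act n s a = Phi act n t a),
      (forall n (s t : fs R H) (a : seq A),
         Phi act n (s ++ t) a = Phi act n s a + Phi act n t a),
      (forall n c (s : fs R H) (a : seq A),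
         Phi act n (fscale c s) a = c *: Phi act n s a),
      (forall n (s : fs R H), wf n s -> multilin n (Phi act n s))
    (* morphism of operads with multiplication: identity, multiplication,
       e, and partial compositions are preserved *)
    & [/\ (forall a : seq A, size a = 1%N -> Phi act 1 (idH H) a = nth 0 a 0),
          (forall a : seq A, size a = 2%N -> Phi act 2 (muH H) a = muE a),
          Phi act 0 (eH H) [::] = 1,
          (forall m n i (s t : fs R H), wf m s -> wf n t -> (1 <= i <= m)%N ->
             forall a : seq A, size a = (m + n).-1 ->
               Phi act (m + n).-1 (compH Delta eps m n i s t) a
               = compE m n i (Phi act m s) (Phi act n t) a)
        (* consequently, at the cochain level, Phi commutes with the
           differentials, the cup products and the Gerstenhaber brackets, so
           it induces a morphism of Gerstenhaber algebras
           Cotor_H(k,k) -> HH(A,A) *)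
        & [/\ (forall n (f : fs R H), wf n f ->
                 forall a : seq A, size a = n.+1 ->
                   Phi act n.+1 (dH Delta eps n f) a = dE n (Phi act n f) a),
              (forall m n (f g : fs R H), wf m f -> wf n g ->
                 forall a : seq A, size a = (m + n)%N ->
                   Phi act (m + n) (cupH Delta eps m n f g) a
                   = cupE m n (Phi act m f) (Phi act n g) a)
            & (forall m n (f g : fs R H), wf m f -> wf n g ->
                 forall a : seq A, size a = (m + n).-1 ->
                   Phi act (m + n).-1 (bracketH Delta eps m n f g) a
                   = bracketE m n (Phi act m f) (Phi act n g) a)]]].
Proof.
move=> _ [aDl aDr aM a1 [aMA aU]].
exact: (main_sec _ _ _ _ _ _ aDl aDr aM a1 aMA aU).
Qed.
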